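(* Let $X$ be a locally compact (not necessarily abelian) group with neutral element $e$ such that for every open neighbourhood $U_e$ of $e$ there exists $x_*\in U_e$ such that the sequence $(x_*^n)_{n\in\mathbb{N}}$ is not contained in any compact subset of $X$. If a family $\mathcal{F}\subset C_0(X)$ is equicontinuous at every point and equivanishing, then it is pointwise bounded.
   Context: $C_0(X)$ is the space of continuous complex-valued functions on $X$ vanishing at infinity. $\mathcal{F}$ is pointwise bounded if for every $x\in X$ there is $M_x>0$ with $|f(x)|<M_x$ for all $f\in\mathcal{F}$; equicontinuous at every point if for every $x\in X$ and $\varepsilon>0$ there is an open neighbourhood $U$ of $x$ with $|f(y)-f(x)|<\varepsilon$ for all $y\in U$, $f\in\mathcal{F}$; equivanishing if for every $\varepsilon>0$ there is a compact $K\subset X$ with $\sup_{x\in X\setminus K}|f(x)|<\varepsilon$ for all $f\in\mathcal{F}$. *)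

(* Defs.v *)
From HB Require Import structures.
From mathcomp Require Import all_boot all_order all_algebra.
From mathcomp Require Import all_classical all_reals.
From mathcomp Require Import topology.
From mathcomp Require Import complex.
Set Implicit Arguments.
Unset Strict Implicit.
Unset Printing Implicit Defensive.
Import Order.TTheory GRing.Theory Num.Theory.
Local Open Scope ring_scope.
Local Open Scope classical_set_scope.

Definition cabs {R : realType} (z : R[i]) : R := ComplexField.Normc.normc z.

Section Defs.
Variables (R : realType) (X : topologicalType).

Definition is_topological_group (mul : X -> X -> X) (inv : X -> X) (e : X) :=
  [/\ (forall x y z, mul x (mul y z) = mul (mul x y) z),
      (forall x, mul e x = x /\ mul x e = x),
      (forall x, mul (inv x) x = e /\ mul x (inv x) = e),
      continuous (fun p : X * X => mul p.1 p.2)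
    & continuous inv].

Definition gpow (mul : X -> X -> X) (e : X) (x : X) (n : nat) : X :=
  iter n (mul x) e.

Definition cont_C (f : X -> R[i]) :=
  forall x (eps : R), 0 < eps ->
    exists U : set X, [/\ open U, U x &
      forall y, U y -> cabs (f y - f x) < eps].

Definition vanishes_at_infinity (f : X -> R[i]) :=
  forall eps : R, 0 < eps ->
    exists K : set X, compact K /\ forall x, ~ K x -> cabs (f x) < eps.

Definition C0 : set (X -> R[i]) :=
  [set f | cont_C f /\ vanishes_at_infinity f].

Definition pointwise_bounded (F : set (X -> R[i])) :=
  forall x, exists M : R, 0 < M /\ forall f, F f -> cabs (f x) < M.

Definition equicontinuous_everywhere (F : set (X -> R[i])) :=
  forall x (eps : R), 0 < eps ->
    exists U : set X, [/\ open U, U x &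
      forall y f, U y -> F f -> cabs (f y - f x) < eps].

Definition equivanishing (F : set (X -> R[i])) :=
  forall eps : R, 0 < eps ->
    exists K : set X, compact K /\
      forall f, F f -> forall x, ~ K x -> cabs (f x) < eps.
End Defs.

(* Main.v *)
Require Import Defs.
From HB Require Import structures.
From mathcomp Require Import all_boot all_order all_algebra.
From mathcomp Require Import all_classical all_reals.
From mathcomp Require Import topology.
From mathcomp Require Import complex.
Import Order.TTheory GRing.Theory Num.Theory.
Local Open Scope ring_scope.
Local Open Scope classical_set_scope.

Lemma cabs_tri (R : realType) (a b : R[i]) : cabs a <= cabs b + cabs (a - b).
Proof.
rewrite /cabs. have := @le_normcD R b (a - b).
by rewrite addrC subrK.
Qed.

Lemma cabs_tri' (R : realType) (a b : R[i]) : cabs a <= cabs b + cabs (b - a).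
Proof.
rewrite /cabs. have := @le_normcD R b (- (b - a)).
by rewrite normcN opprB addrC subrK.
Qed.

Lemma cabs_ge0 (R : realType) (a : R[i]) : 0 <= cabs a.
Proof. rewrite /cabs /ComplexField.Normc.normc; case: a => ? ? /=; exact: sqrtr_ge0. Qed.

Theorem theorem4p7 (R : realType) (X : topologicalType)
  (mul : X -> X -> X) (inv : X -> X) (e : X) :
  is_topological_group mul inv e ->
  hausdorff_space X ->
  locally_compact [set: X] ->
  (forall U : set X, open U -> U e ->
     exists2 xs : X, U xs &
       ~ (exists K : set X, compact K /\ forall n : nat, K (gpow mul e xs n))) ->
  forall F : set (X -> R[i]),
    F `<=` @C0 R X ->
    equicontinuous_everywhere F ->
    equivanishing F ->
    pointwise_bounded F.
Proof.
move=> [massoc mid minv mcont icont] _ _ Hgen F FC0 Heq Hvan x.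
pose B := fun y => exists M : R, forall f, F f -> cabs (f y) < M.
suff [M HM] : B x.
  exists (`|M| + 1); split; first by rewrite ltr_wpDl.
  move=> f Ff; apply: (lt_le_trans (HM f Ff)).
  by rewrite (le_trans (ler_norm M)) // lerDl.
apply: contrapT => nBx.
pose C := ~` B.
have [K [cK HK]] := Hvan 1 ltr01.
have KB : forall y, ~ K y -> B y by move=> y Ky; exists 1 => f Ff; exact: HK.
have openC : open C.
  rewrite openE => y Cy.
  have [U [oU Uy HU]] := Heq y 1 ltr01.
  apply: (filterS _ (open_nbhs_nbhs (conj oU Uy))) => z Uz [M HM].
  apply: Cy; exists (M + 1) => f Ff.
  apply: (le_lt_trans (@cabs_tri' _ (f y) (f z))).
  by apply: ltrD; [exact: HM | exact: HU].
have openB : open B.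
  rewrite openE => y [M HM].
  have [U [oU Uy HU]] := Heq y 1 ltr01.
  apply: (filterS _ (open_nbhs_nbhs (conj oU Uy))) => z Uz.
  exists (M + 1) => f Ff.
  apply: (le_lt_trans (@cabs_tri _ (f z) (f y))).
  by apply: ltrD; [exact: HM | exact: HU].
have cC : compact C.
  apply: (subclosed_compact (open_closedC openB) cK) => y Cy.
  by apply: contrapT => Ky; apply: Cy; exact: KB.
have nW : nbhs e [set v | C `<=` (fun c => C (mul v c))].
  apply: ((compact_near_coveringP C).1 cC X (nbhs e) (fun v c => C (mul v c))) => c Cc.
  have : nbhs (e, c) [set p | C (mul p.1 p.2)].
    have := mcont (e, c); move=> /(_ C); rewrite /= (proj1 (mid c)).
    move=> H; apply: H.
    exact: (open_nbhs_nbhs (conj openC Cc)).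
  case=> [[A1 A2]] /= [nA1 nA2] sub.
  exists (A2, A1) => //= [[c' v]] /= [A2c A1v].
  exact: (sub (v, c')).
rewrite nbhsE /= in nW; case: nW => U [oU Ue] UW.
have [xs Uxs Hnc] := Hgen U oU Ue.
apply: Hnc.
exists ((fun y => mul y (inv x)) @` C); split.
  apply: continuous_compact => //; apply: continuous_subspaceT => y.
  apply: (continuous2_cvg (h := mul) _ _ _ _) => //.
    exact: (mcont (y, inv x)).
  exact: cvg_cst.
move=> n; exists (mul (gpow mul e xs n) x).
  elim: n => [|n IH] /=; first by rewrite (proj1 (mid x)).
  rewrite -massoc; exact: (UW _ Uxs _ IH).
by rewrite -massoc (proj2 (minv x)) (proj2 (mid _)).
Qed.
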